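(* Let $G=(V,E)$ be a $k$-uniform cored hypergraph ($k\ge3$) and let $\mathbf x\in\mathbb R^n$ be an H-eigenvector of its Laplacian tensor $\mathcal L$ corresponding to an H-eigenvalue $\lambda\neq1$. If $i,j$ are two cored vertices lying in a common edge $e\in E$, then $|x_i|=|x_j|$; moreover $x_i=x_j$ when $k$ is odd.
   Context: A $k$-uniform hypergraph $G=(V,E)$ has $V=[n]$ and a nonempty set $E$ of $k$-element subsets of $V$; $d_i$ is the number of edges containing $i$. A cored vertex is a vertex of degree one; $G$ is cored if every edge contains a cored vertex. The Laplacian tensor $\mathcal L=\mathcal D-\mathcal A$ ($\mathcal D$ diagonal with entries $d_i$, $\mathcal A$ with entries $\frac1{(k-1)!}$ at index tuples forming an edge and $0$ otherwise) satisfies $(\mathcal L\mathbf x^{k-1})_i=d_ix_i^{k-1}-\sum_{e\in E,\,i\in e}\prod_{s\in e\setminus\{i\}}x_s$. A real $\lambda$ is an H-eigenvalue with H-eigenvector $\mathbf x\neq0$ if $(\mathcal L\mathbf x^{k-1})_i=\lambda x_i^{k-1}$ for all $i$. *)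

(* Defs.v *)
From mathcomp Require Import all_boot all_order all_algebra.
From mathcomp Require Import reals.
Set Implicit Arguments. Unset Strict Implicit. Unset Printing Implicit Defensive.
Import Order.TTheory GRing.Theory Num.Theory.
Local Open Scope ring_scope.

Definition uniform_hypergraph (n k : nat) (E : {set {set 'I_n}}) : Prop :=
  E != set0 /\ forall e, e \in E -> #|e| = k.

Definition degree (n : nat) (E : {set {set 'I_n}}) (i : 'I_n) : nat :=
  #|[set e in E | i \in e]|.

Definition cored_vertex (n : nat) (E : {set {set 'I_n}}) (i : 'I_n) : Prop :=
  degree E i = 1%N.

Definition cored (n : nat) (E : {set {set 'I_n}}) : Prop :=
  forall e, e \in E -> exists2 i, i \in e & cored_vertex E i.

(* (L x^{k-1})_i = d_i x_i^{k-1} - sum_{e in E, i in e} prod_{s in e \ {i}} x_s *)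
Definition laplacian_apply (R : nzRingType) (n k : nat) (E : {set {set 'I_n}})
  (x : 'I_n -> R) (i : 'I_n) : R :=
  (degree E i)%:R * x i ^+ k.-1
  - \sum_(e in E | i \in e) \prod_(s in e :\ i) x s.

Definition H_eigenpair (R : nzRingType) (n k : nat) (E : {set {set 'I_n}})
  (lambda : R) (x : 'I_n -> R) : Prop :=
  (exists i, x i != 0) /\
  forall i, laplacian_apply k E x i = lambda * x i ^+ k.-1.

(* Main.v *)
Require Import Defs.
From mathcomp Require Import all_boot all_order all_algebra.
From mathcomp Require Import reals ring.
Import Order.TTheory GRing.Theory Num.Theory.
Local Open Scope ring_scope.

Lemma cored_eq (R : realType) (n k : nat) (E : {set {set 'I_n}})
  (lambda : R) (x : 'I_n -> R) (i : 'I_n) (e : {set 'I_n}) :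
  (0 < k)%N ->
  H_eigenpair k E lambda x ->
  e \in E -> i \in e -> cored_vertex E i ->
  (1 - lambda) * x i ^+ k = \prod_(s in e) x s.
Proof.
move=> k0 [_ H] eE ie ci.
have Hs : [set e' in E | i \in e'] = [set e].
  have /cards1P [f Hf] : #|[set e' in E | i \in e']| == 1%N by apply/eqP; exact: ci.
  have : e \in [set e' in E | i \in e'] by rewrite inE eE ie.
  by rewrite Hf inE => /eqP ->.
have Hsum : \sum_(e' in E | i \in e') \prod_(s in e' :\ i) x s
           = \prod_(s in e :\ i) x s.
  rewrite (eq_bigl (fun e' => e' \in [set e' in E | i \in e'])); last first.
    by move=> e'; rewrite inE.
  by rewrite Hs big_set1.
have := H i; rewrite /laplacian_apply Hsum.
move: (ci); rewrite /cored_vertex => ->.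
move=> Hl.
rewrite (bigD1 i) //=.
have -> : \prod_(s in e | s != i) x s = \prod_(s in e :\ i) x s.
  by apply: eq_bigl => s; rewrite !inE andbC.
have -> : \prod_(s in e :\ i) x s = (1 - lambda) * x i ^+ k.-1.
  by rewrite -[RHS]subr0 -(subrr (lambda * x i ^+ k.-1)) -{1}Hl; ring.
by rewrite -{1}(prednK k0) exprS; ring.
Qed.

Theorem lemma3p1 (R : realType) (n k : nat) (E : {set {set 'I_n}})
  (lambda : R) (x : 'I_n -> R) (i j : 'I_n) (e : {set 'I_n}) :
  (3 <= k)%N ->
  uniform_hypergraph k E ->
  cored E ->
  H_eigenpair k E lambda x ->
  lambda != 1 ->
  e \in E -> i \in e -> j \in e ->
  cored_vertex E i -> cored_vertex E j ->
  `|x i| = `|x j| /\ (odd k -> x i = x j).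
Proof.
move=> k3 _ _ Hp l1 eE ie je ci cj.
have k0 : (0 < k)%N by apply: leq_trans k3.
have := @cored_eq R n k E lambda x i e k0 Hp eE ie ci; rewrite -(@cored_eq R n k E lambda x j e k0 Hp eE je cj).
move/mulfI; rewrite subr_eq0 eq_sym l1 => /(_ isT) Hk.
have Ha : `|x i| = `|x j|.
  apply/eqP; rewrite -(eqrXn2 k0) ?normr_ge0 // -!normrX Hk //.
split => // ok.
have : (x i ^+ 2 == x j ^+ 2) by rewrite -(real_normK (num_real (x i))) -(real_normK (num_real (x j))) Ha.
rewrite eqf_sqr => /orP [/eqP //| /eqP Hn].
have h : - x j ^+ k = x j ^+ k.
  by rewrite -{2}Hk Hn exprNn -signr_odd ok expr1 mulN1r.
have h2 : x j ^+ k *+ 2 = 0 by rewrite mulr2n -{1}h addNr.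
move/eqP: h2; rewrite mulrn_eq0 /= expf_eq0 => /andP [_ /eqP hj].
by rewrite Hn hj oppr0.
Qed.
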